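(* Let $u$ be a weak solution of the two-phase problem in $\Omega$. Then $u^-=\min\{u,0\}$ is a weak solution of the one-phase problem $\Delta w=0$ in $\{w<0\}$, $|\nabla w|^2=(x_2^0-x_2)^+$ on $\partial\{w<0\}$, in $\Omega\cap\{u\le0\}$.
   Context: Let $\Omega\subset\mathbb{R}^2$ be open and $x_2^0\in\mathbb{R}$ a constant; $\chi_A$ denotes the characteristic function of $A$. A weak solution of the two-phase problem is $u\in W^{1,2}(\Omega)$ with: (i) $u\in C(\Omega)\cap C^2(\Omega\cap\{u\ne0\})$; (ii) for every $\phi=(\phi_1,\phi_2)\in C^1_0(\Omega;\mathbb{R}^2)$, $0=\int_\Omega(|\nabla u|^2\mathrm{div}\phi-2\nabla u\,D\phi\,\nabla u)dx+\int_{\Omega\cap\{x_2<x_2^0\}}((x_2^0-x_2)\chi_{\{u<0\}}\mathrm{div}\phi-\chi_{\{u<0\}}\phi_2)dx+\int_{\Omega\cap\{x_2>x_2^0\}}((x_2-x_2^0)\chi_{\{u>0\}}\mathrm{div}\phi+\chi_{\{u>0\}}\phi_2)dx$; (iii) $\partial\{u<0\}\cap\Omega$ is locally a $C^{2,\alpha}$ curve. A weak solution of the one-phase problem in a domain $U$ is a non-positive $w\in W^{1,2}(U)$ with: (i) $w\in C(U)\cap C^2(U\cap\{w<0\})$; (ii) for every $\phi\in C^1_0(U;\mathbb{R}^2)$, $0=\int_U(|\nabla w|^2\mathrm{div}\phi-2\nabla w\,D\phi\,\nabla w)dx+\int_{U\cap\{x_2<x_2^0\}}((x_2^0-x_2)\chi_{\{w<0\}}\mathrm{div}\phi-\chi_{\{w<0\}}\phi_2)dx$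 (vanishing first domain variation of $\int(|\nabla v|^2+(x_2^0-x_2)^+\chi_{\{v<0\}})dx$); (iii) $\partial\{w<0\}\cap U$ is locally a $C^{2,\alpha}$ curve. *)

(* Defs.v *)
From HB Require Import structures.
From mathcomp Require Import all_boot all_order all_algebra.
From mathcomp Require Import all_classical all_reals all_analysis.
Set Implicit Arguments. Unset Strict Implicit. Unset Printing Implicit Defensive.
Import Order.TTheory GRing.Theory Num.Theory.
Import numFieldNormedType.Exports.
Local Open Scope classical_set_scope.
Local Open Scope ring_scope.

Section Defs.
Variable R : realType.

Notation pt := (R * R)%type.

Definition leb2 := ((@lebesgue_measure R) \x (@lebesgue_measure R))%E.

Definition pd1 (f : pt -> R) : pt -> R :=
  fun x => derive1 (fun t => f (t, x.2)) x.1.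
Definition pd2 (f : pt -> R) : pt -> R :=
  fun x => derive1 (fun t => f (x.1, t)) x.2.
Definition pdir (b : bool) (f : pt -> R) : pt -> R := if b then pd2 f else pd1 f.
Definition has_pdir (b : bool) (f : pt -> R) (x : pt) : Prop :=
  if b then derivable (fun t => f (x.1, t)) x.2 1
  else derivable (fun t => f (t, x.2)) x.1 1.
Definition pdn (s : seq bool) (f : pt -> R) : pt -> R := foldr pdir f s.

Definition Ck_on (k : nat) (U : set pt) (f : pt -> R) : Prop :=
  (forall s : seq bool, (size s < k)%N -> forall b x, U x -> has_pdir b (pdn s f) x) /\
  (forall s : seq bool, (size s <= k)%N -> forall x, U x -> {for x, continuous (pdn s f)}).

Definition smooth_on (U : set pt) (f : pt -> R) : Prop := forall k, Ck_on k U f.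

Definition continuous_on (U : set pt) (f : pt -> R) : Prop :=
  forall x, U x -> {for x, continuous f}.

Definition compact_support_in (U : set pt) (f : pt -> R) : Prop :=
  exists K : set pt, [/\ compact K, K `<=` U & forall x, ~ K x -> f x = 0].

Definition C10 (U : set pt) (phi1 phi2 : pt -> R) : Prop :=
  [/\ Ck_on 1 setT phi1, Ck_on 1 setT phi2,
      compact_support_in U phi1 & compact_support_in U phi2].

Definition L2 (U : set pt) (f : pt -> R) : Prop :=
  measurable_fun U f /\ (\int[leb2]_(x in U) ((f x) ^+ 2)%:E < +oo)%E.

Definition weak_grad (U : set pt) (u g1 g2 : pt -> R) : Prop :=
  forall psi : pt -> R, smooth_on setT psi -> compact_support_in U psi ->
    Rintegral leb2 U (fun x => u x * pd1 psi x) = - Rintegral leb2 U (fun x => g1 x * psi x) /\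
    Rintegral leb2 U (fun x => u x * pd2 psi x) = - Rintegral leb2 U (fun x => g2 x * psi x).

Definition W12_with (U : set pt) (u g1 g2 : pt -> R) : Prop :=
  [/\ L2 U u, L2 U g1, L2 U g2 & weak_grad U u g1 g2].

Definition bdry (A : set pt) : set pt := closure A `\` interior A.

Definition C2alpha (alpha : R) (g : R -> R) : Prop :=
  (forall t, derivable g t 1) /\ (forall t, derivable (derive1 g) t 1) /\
  exists M : R, forall a b : R, `|derive1 (derive1 g) a - derive1 (derive1 g) b| <= M * powR `|a - b| alpha
  .

(* "bdry A \cap U is locally a C^{2,alpha} curve": near each of its points it is,
   in suitably rotated coordinates (y1, y2) = (c x1 + s x2, - s x1 + c x2), the
   graph y2 = g(y1) of a C^{2,alpha} function g. *)
Definition loc_C2alpha_curve (alpha : R) (U A : set pt) : Prop :=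
  forall x0, U x0 -> bdry A x0 ->
    exists r : R, exists c s : R, exists g : R -> R,
      [/\ 0 < r, c ^+ 2 + s ^+ 2 = 1, C2alpha alpha g &
          forall x : pt, ball x0 r x ->
            (bdry A x <-> - s * x.1 + c * x.2 = g (c * x.1 + s * x.2))].

Definition chi (A : set pt) (x : pt) : R := \1_A x.

Definition divf (phi1 phi2 : pt -> R) (x : pt) : R := pd1 phi1 x + pd2 phi2 x.

(* grad u . D phi . grad u, with grad u = (g1, g2) *)
Definition quadD (g1 g2 phi1 phi2 : pt -> R) (x : pt) : R :=
  g1 x * g1 x * pd1 phi1 x + g1 x * g2 x * (pd2 phi1 x + pd1 phi2 x)
  + g2 x * g2 x * pd2 phi2 x.

Definition two_phase_weak_sol (alpha : R) (Omega : set pt) (x20 : R) (u : pt -> R) : Prop :=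
  exists g1 g2 : pt -> R,
  [/\ W12_with Omega u g1 g2,
      continuous_on Omega u /\ Ck_on 2 (Omega `&` [set x | u x != 0]) u,
      (forall phi1 phi2 : pt -> R, C10 Omega phi1 phi2 ->
        0 = Rintegral leb2 Omega (fun x =>
              (g1 x ^+ 2 + g2 x ^+ 2) * divf phi1 phi2 x - 2 * quadD g1 g2 phi1 phi2 x)
          + Rintegral leb2 (Omega `&` [set x | x.2 < x20]) (fun x =>
              (x20 - x.2) * chi [set y | u y < 0] x * divf phi1 phi2 x
              - chi [set y | u y < 0] x * phi2 x)
          + Rintegral leb2 (Omega `&` [set x | x.2 > x20]) (fun x =>
              (x.2 - x20) * chi [set y | u y > 0] x * divf phi1 phi2 x
              + chi [set y | u y > 0] x * phi2 x))
    & loc_C2alpha_curve alpha Omega [set x | u x < 0]].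

Definition one_phase_weak_sol (alpha : R) (U : set pt) (x20 : R) (w : pt -> R) : Prop :=
  exists g1 g2 : pt -> R,
  [/\ (forall x, U x -> w x <= 0) /\ W12_with U w g1 g2,
      continuous_on U w /\ Ck_on 2 (U `&` [set x | w x < 0]) w,
      (forall phi1 phi2 : pt -> R, C10 U phi1 phi2 ->
        0 = Rintegral leb2 U (fun x =>
              (g1 x ^+ 2 + g2 x ^+ 2) * divf phi1 phi2 x - 2 * quadD g1 g2 phi1 phi2 x)
          + Rintegral leb2 (U `&` [set x | x.2 < x20]) (fun x =>
              (x20 - x.2) * chi [set y | w y < 0] x * divf phi1 phi2 x
              - chi [set y | w y < 0] x * phi2 x))
    & loc_C2alpha_curve alpha U [set x | w x < 0]].

End Defs.

(* Main.v *)
Require Import Defs.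
From HB Require Import structures.
From mathcomp Require Import all_boot all_order all_algebra.
From mathcomp Require Import all_classical all_reals all_analysis.
From mathcomp Require Import lra.
Import Order.TTheory GRing.Theory Num.Theory.
Import numFieldNormedType.Exports.
Local Open Scope classical_set_scope.
Local Open Scope ring_scope.
Set Implicit Arguments.
Section H.
Variable R : realType.
Notation pt := (R * R)%type.

Lemma ballE (x y : pt) e : ball x e y <-> (ball x.1 e y.1 /\ ball x.2 e y.2).
Proof. by []. Qed.

Lemma ballX (a b : R) e : ball ((a, b) : pt) e = ball a e `*` ball b e.
Proof. by apply/seteqP; split => y. Qed.

Lemma aux1 {e r q x z : R} : r < e / 4 -> 0 < r -> q < x -> x - r < q ->
  `|q - z| < r -> `|x - z| < e.
Proof. move=> h1 h2 h3 h4; rewrite ltr_norml => /andP[? ?]; rewrite ltr_norml; apply/andP; split; lra. Qed.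

Lemma aux2 {r q x : R} : q < x -> x - r < q -> `|q - x| < r.
Proof. move=> *; rewrite ltr_norml; apply/andP; split; lra. Qed.

Lemma open_meas (A : set pt) : open A -> measurable A.
Proof.
move=> oA.
pose F := fun i : (rat * rat * rat) =>
  if pselect (ball ((ratr i.1.1 : R), (ratr i.1.2 : R)) (ratr i.2) `<=` A)
  then ball ((ratr i.1.1 : R), (ratr i.1.2 : R)) (ratr i.2) else set0.
have -> : A = \bigcup_i F i.
  apply/seteqP; split; last first.
    by move=> x [i _]; rewrite /F; case: pselect => // H /H.
  move=> [x1 x2] Ax; set x := (x1, x2).
  have : nbhs x A by apply: open_nbhs_nbhs.
  case/nbhs_ballP => e /= e0 He.
  have [r /andP[r0 r1]] : exists r, ratr r \in `](0:R), e / 4[.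
    by apply: rat_in_itvoo; rewrite divr_gt0.
  have [q1 /andP[q11 q12]] := @rat_in_itvoo R (x1 - ratr r) x1 ltac:(by rewrite ltrBlDr ltrDl).
  have [q2 /andP[q21 q22]] := @rat_in_itvoo R (x2 - ratr r) x2 ltac:(by rewrite ltrBlDr ltrDl).
  exists (q1, q2, r) => //; rewrite /F /=.
  have q11' : x1 - ratr r < ratr q1 by [].
  have q12' : ratr q1 < x1 by [].
  have q21' : x2 - ratr r < ratr q2 by [].
  have q22' : ratr q2 < x2 by [].
  have rE : (ratr r : R) < e / 4 by [].
  have r0' : (0 : R) < ratr r by [].
  have sub : ball ((ratr q1 : R), (ratr q2 : R)) (ratr r) `<=` A.
    move=> [z1 z2] /ballE [/= y1 y2]; apply: He; apply/ballE; split.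
      rewrite /x; move: y1; rewrite /ball /= => y1; exact: (aux1 rE r0' q12' q11' y1).
    rewrite /x; move: y2; rewrite /ball /= => y2; exact: (aux1 rE r0' q22' q21' y2).
  case: pselect => [p|np]; last by exfalso; apply: np. apply/ballE; split.
    rewrite /x /ball /=; exact: (aux2 q12' q11').
  rewrite /x /ball /=; exact: (aux2 q22' q21').
apply: countable_bigcupT_measurable; first exact: countableP.
move=> i; rewrite /F ballX; case: pselect => p.
  by apply: measurableX; rewrite ball_itv; exact: measurable_itv.
exact: measurable0.
Qed.
Lemma RI (A B : set pt) (f g : pt -> R) :
  (forall x, A x -> B x -> f x = g x) ->
  (forall x, A x -> ~ B x -> f x = 0) ->
  (forall x, B x -> ~ A x -> g x = 0) ->
  Rintegral (@leb2 R) A f = Rintegral (@leb2 R) B g.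
Proof.
move=> h1 h2 h3; rewrite /Rintegral integral_mkcond [in RHS]integral_mkcond.
congr fine; congr integral; apply/funext => x; rewrite /patch.
case: (pselect (A x)) => Ax; [rewrite mem_set // | rewrite memNset //];
  (case: (pselect (B x)) => Bx; [rewrite (mem_set Bx) | rewrite (memNset Bx)]) => //=.
- by rewrite h1.
- by rewrite h2.
- by rewrite h3.
Qed.

Lemma int_mono (A B : set pt) (f : pt -> \bar R) : A `<=` B -> (forall x, (0 <= f x)%E) ->
  (\int[@leb2 R]_(x in A) f x <= \int[@leb2 R]_(x in B) f x)%E.
Proof.
move=> AB f0; rewrite !ge0_integralE //.
apply: ereal_sup_le => _ [h /= hf <-]; exists h => //= x.
apply: (le_trans (hf x)); rewrite /patch.
case: (pselect (A x)) => Ax; [rewrite mem_set // | rewrite memNset //];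
  (case: (pselect (B x)) => Bx; [rewrite (mem_set Bx) | rewrite (memNset Bx)]) => //=.
by exfalso; apply: Bx; apply: AB.
Qed.
Lemma near_line b {f g : pt -> R} {x : pt} : (\forall y \near x, f y = g y) ->
  pdir b f x = pdir b g x /\ (has_pdir b f x -> has_pdir b g x).
Proof.
case: x => x1 x2 H.
have c1 : (fun t => (t, x2)) @ x1 --> ((x1, x2) : pt).
  exact: (cvg_pair cvg_id (cvg_cst x2)).
have c2 : (fun t => (x1, t)) @ x2 --> ((x1, x2) : pt).
  exact: (cvg_pair (cvg_cst x1) cvg_id).
have H1 : \forall t \near x1, f (t, x2) = g (t, x2) by exact: c1 _ H.
have H2 : \forall t \near x2, f (x1, t) = g (x1, t) by exact: c2 _ H.
case: b; rewrite /pdir /pd1 /pd2 /has_pdir /=; rewrite !derive1E; split.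
- exact: near_eq_derive.
- exact: near_eq_derivable.
- exact: near_eq_derive.
- exact: near_eq_derivable.
Qed.

Lemma near_cont {f g : pt -> R} {x : pt} : (\forall y \near x, f y = g y) ->
  {for x, continuous f} -> {for x, continuous g}.
Proof.
move=> H cf; have e : f x = g x := nbhs_singleton H.
rewrite /prop_for /continuous_at -e.
exact: cvg_trans (near_eq_cvg H) cf.
Qed.

Lemma open_near {V : set pt} {x} : open V -> V x -> \forall y \near x, V y.
Proof. by move=> oV Vx; apply: open_nbhs_nbhs. Qed.

Lemma pdn_local {V : set pt} {f g : pt -> R} : open V -> (forall x, V x -> f x = g x) ->
  forall s x, V x -> pdn s f x = pdn s g x.
Proof.
move=> oV fg; elim => [|b s IH] x Vx /=; first exact: fg.
have : \forall y \near x, pdn s f y = pdn s g y.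
  by apply: (@filterS _ _ _ V); [move=> y Vy; exact: IH | exact: open_near].
by move/(near_line b) => [].
Qed.

Lemma pdn_near {V : set pt} {f g : pt -> R} : open V -> (forall x, V x -> f x = g x) ->
  forall s x, V x -> \forall y \near x, pdn s f y = pdn s g y.
Proof.
move=> oV fg s x Vx; apply: (@filterS _ _ _ V); [move=> y Vy; exact: (pdn_local oV fg s y Vy) | exact: open_near].
Qed.

Lemma Ck_transfer k {V W W' : set pt} {f g : pt -> R} : open V ->
  (forall x, V x -> f x = g x) -> W `<=` W' -> W `<=` V -> Ck_on k W' f -> Ck_on k W g.
Proof.
move=> oV fg WW' WV [h1 h2]; split.
  move=> s hs b x Wx; have := pdn_near oV fg s x (WV _ Wx).
  by move/(near_line b) => [_]; apply; apply: h1 => //; exact: WW'.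
move=> s hs x Wx; have := pdn_near oV fg s x (WV _ Wx).
by move/near_cont; apply; apply: h2 => //; exact: WW'.
Qed.
Lemma cs_near {U : set pt} {psi : pt -> R} : compact_support_in U psi ->
  forall x, ~ U x -> \forall y \near x, psi y = (fun _ => 0 : R) y.
Proof.
move=> [K [cK KU K0]] x Ux.
have oK : open (~` K) by apply: closed_openC; apply: compact_closed => //; exact: norm_hausdorff.
have : nbhs x (~` K) by apply: open_nbhs_nbhs; split => // Kx; apply: Ux; exact: KU.
by apply: filterS => y /K0.
Qed.
Lemma pd_cst b (x : pt) : pdir b (fun _ => 0 : R) x = 0.
Proof. by case: b; rewrite /pdir /pd1 /pd2 derive1_cst. Qed.

Lemma cs_vals {U : set pt} {psi : pt -> R} : compact_support_in U psi ->
  forall x, ~ U x -> [/\ psi x = 0, pd1 psi x = 0 & pd2 psi x = 0].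
Proof.
move=> cs x Ux; have H := cs_near cs x Ux; split.
- exact: (nbhs_singleton H).
- by have [+ _] := near_line false H; rewrite (pd_cst false x).
- by have [+ _] := near_line true H; rewrite (pd_cst true x).
Qed.

Lemma csO {U O : set pt} {psi : pt -> R} : U `<=` O ->
  compact_support_in U psi -> compact_support_in O psi.
Proof.
by move=> UO [K [cK KU K0]]; exists K; split => //; apply: subset_trans KU UO.
Qed.

Lemma chi0 (A : set pt) x : ~ A x -> chi A x = 0.
Proof. by move=> Ax; rewrite /chi indicE memNset. Qed.

Lemma L2_sub {U O : set pt} {f f' : pt -> R} : measurable O -> measurable U ->
  U `<=` O -> (forall x, U x -> f x = f' x) -> L2 O f' -> L2 U f.
Proof.
move=> mO mU UO ff' [mf fi]; split.
  move=> _ Y mY.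
  have -> : U `&` f @^-1` Y = U `&` (O `&` f' @^-1` Y).
    apply/seteqP; split => x [Ux].
      by rewrite /preimage /= ff' // => ?; split => //; split => //; apply: UO.
    by move=> [_]; rewrite /preimage /= -ff'.
  by apply: measurableI => //; exact: mf.
apply: le_lt_trans fi.
apply: le_trans (int_mono (fun x => ((f' x) ^+ 2)%:E) UO _); last first.
  by move=> x; rewrite lee_fin sqr_ge0.
rewrite le_eqVlt; apply/orP; left; apply/eqP; apply: eq_integral => x; rewrite inE => Ux /=; rewrite ff' //.
Qed.
End H.

Theorem proposition2p1 (R : realType) (alpha : R) (Omega : set (R * R)%type)
  (x20 : R) (u : (R * R)%type -> R) :
  0 < alpha < 1 -> open Omega ->
  two_phase_weak_sol alpha Omega x20 u ->
  one_phase_weak_sol alpha (interior (Omega `&` [set x | u x <= 0])) x20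
    (fun x => Num.min (u x) 0).
Proof.
move=> _ oO [g1 [g2 [[L2u L2g1 L2g2 wg] [cu Cku] eqv curve]]].
set U := interior (Omega `&` [set x | u x <= 0]).
have oU : open U by exact: open_interior.
have UO : U `<=` Omega by move=> x /interior_subset [].
have Ule : forall x, U x -> u x <= 0 by move=> x /interior_subset [].
have wu : forall x, U x -> Num.min (u x) 0 = u x by move=> x /Ule ?; rewrite min_l.
have setE : forall y, (Num.min (u y) 0 < 0) = (u y < 0).
  by move=> y; rewrite gt_min ltxx orbF.
have SE : [set y | Num.min (u y) 0 < 0] = [set y | u y < 0].
  by apply/seteqP; split => y /=; rewrite setE.
have mO := open_meas oO.
have mU := open_meas oU.
exists g1, g2; split.
- split; first by move=> x Ux; rewrite ge_min lexx orbT.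
  split.
  + exact: (L2_sub mO mU UO wu L2u).
  + exact: (L2_sub mO mU UO (fun _ _ => erefl) L2g1).
  + exact: (L2_sub mO mU UO (fun _ _ => erefl) L2g2).
  + move=> psi sp csU; have [h1 h2] := wg psi sp (csO UO csU).
    have [E1 E2 E3 E4] :
       [/\ Rintegral (@leb2 R) U (fun x => Num.min (u x) 0 * pd1 psi x) = Rintegral (@leb2 R) Omega (fun x => u x * pd1 psi x),
           Rintegral (@leb2 R) U (fun x => Num.min (u x) 0 * pd2 psi x) = Rintegral (@leb2 R) Omega (fun x => u x * pd2 psi x),
           Rintegral (@leb2 R) U (fun x => g1 x * psi x) = Rintegral (@leb2 R) Omega (fun x => g1 x * psi x) &
           Rintegral (@leb2 R) U (fun x => g2 x * psi x) = Rintegral (@leb2 R) Omega (fun x => g2 x * psi x)].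
      split; (apply: RI => x; [move=> Ux _; rewrite ?wu // | move=> Ux Ox; exfalso; apply: Ox; exact: (UO _ Ux) | move=> _ Ux; have [e1 e2 e3] := cs_vals csU x Ux; rewrite ?e1 ?e2 ?e3 mulr0 //]).
    by rewrite E1 E2 E3 E4.
- split.
  + move=> x Ux; apply: (near_cont (f := u)); last exact: cu x (UO x Ux).
    apply: (@filterS _ _ _ U); last exact: open_near oU Ux.
    by move=> y Uy; rewrite /= wu.
  + apply: (Ck_transfer (V := U) (W' := Omega `&` [set x | u x != 0]) (f := u) oU _ _ _ Cku).
    * by move=> x Ux; rewrite wu.
    * move=> x [Ux /=]; rewrite wu // => ux; split; first exact: UO.
      by rewrite /= lt_eqF.
    * by move=> x [].
- move=> phi1 phi2 [c1 c2 s1 s2].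
  have H := eqv phi1 phi2 (And4 c1 c2 (csO UO s1) (csO UO s2)).
  rewrite SE.
  have Z : forall x, ~ U x -> [/\ divf phi1 phi2 x = 0, quadD g1 g2 phi1 phi2 x = 0 & phi2 x = 0].
    move=> x Ux; have [_ p11 p12] := cs_vals s1 x Ux; have [p20 p21 p22] := cs_vals s2 x Ux.
    by rewrite /divf /quadD p11 p12 p21 p22 p20 !(mulr0, addr0).
  have E1 : Rintegral (@leb2 R) U (fun x => (g1 x ^+ 2 + g2 x ^+ 2) * divf phi1 phi2 x - 2 * quadD g1 g2 phi1 phi2 x)
     = Rintegral (@leb2 R) Omega (fun x => (g1 x ^+ 2 + g2 x ^+ 2) * divf phi1 phi2 x - 2 * quadD g1 g2 phi1 phi2 x).
    apply: RI => x; [by [] | move=> Ux Ox; exfalso; apply: Ox; exact: (UO _ Ux) |].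
    by move=> _ Ux; have [-> -> _] := Z x Ux; rewrite !(mulr0, subr0).
  have E2 : Rintegral (@leb2 R) (U `&` [set x | x.2 < x20]) (fun x =>
              (x20 - x.2) * chi [set y | u y < 0] x * divf phi1 phi2 x
              - chi [set y | u y < 0] x * phi2 x)
     = Rintegral (@leb2 R) (Omega `&` [set x | x.2 < x20]) (fun x =>
              (x20 - x.2) * chi [set y | u y < 0] x * divf phi1 phi2 x
              - chi [set y | u y < 0] x * phi2 x).
    apply: RI => x; [by [] | move=> [Ux lt] Ox; exfalso; apply: Ox; split => //; exact: (UO _ Ux) |].
    move=> [Ox lt] nA; have Ux : ~ U x by move=> Ux; apply: nA.
    by have [-> _ ->] := Z x Ux; rewrite !(mulr0, subr0).
  have E3 : Rintegral (@leb2 R) set0 (fun _ => 0) = Rintegral (@leb2 R) (Omega `&` [set x | x.2 > x20]) (fun x =>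
              (x.2 - x20) * chi [set y | u y > 0] x * divf phi1 phi2 x
              + chi [set y | u y > 0] x * phi2 x).
    apply: RI => x; [by [] | by [] |].
    move=> [Ox gt] _; case: (pselect (U x)) => Ux.
      rewrite chi0 ?(mulr0, mul0r, addr0) //= => h.
      by have := Ule x Ux; rewrite leNgt h.
    by have [-> _ ->] := Z x Ux; rewrite !(mulr0, addr0).
  rewrite Rintegral_set0 in E3.
  rewrite E1 E2; move: H; rewrite -E3 addr0; exact.
- rewrite SE => x0 Ux0 bx0; exact: curve x0 (UO _ Ux0) bx0.
Qed.
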